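(* Let $\Gamma$ be a valued structure with domain $\mathbb{Q}$ all of whose cost functions are piecewise linear (or piecewise linear homogeneous) and submodular. Then $\Gamma$ has fully symmetric fractional polymorphisms of all arities $k\ge2$.
   Context: A valued structure with domain $\mathbb{Q}$ has a signature $\tau$ of function symbols and cost functions $f\colon\mathbb{Q}^{\mathrm{ar}(f)}\to\mathbb{Q}\cup\{+\infty\}$. A cost function is piecewise linear (PL) if, as a partial function defined where finite, it is first-order definable over $\mathfrak{S}=(\mathbb{Q};+,1,\le)$, and piecewise linear homogeneous (PLH) if first-order definable over $\mathfrak{L}=(\mathbb{Q};<,1,(x\mapsto cx)_{c\in\mathbb{Q}})$ (definability of a partial $f$: a formula $\varphi(x_0,\dots,x_n)$ with $\varphi(a_0,a)$ iff $a_0=f(a)$ for $f(a)<\infty$, and no satisfying $a_0$ when $f(a)=+\infty$). $f$ is submodular if $f(\min(a,b))+f(\max(a,b))\le f(a)+f(b)$ for all $a,b$ (componentwise min, max). A $k$-ary fractional polymorphism of $\Gamma$ is a map $\omega$ from operations $\mathbb{Q}^k\to\mathbb{Q}$ to $\mathbb{Q}_{\ge0}$ with finite support, total weight $1$, and $\sum_g\omega(g)f(g(a^1,\dots,a^k))\le\frac1k\sum_i f(a^i)$ for all cost functions $f$ of $\Gamma$ and tuples $a^i$ ($g$ componentwise); it is fully symmetric if each $g$ in its support is invariant under permuting its arguments. *)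

(* Defs.v *)
From Stdlib Require List.
From HB Require Import structures.
From mathcomp Require Import all_boot all_order all_algebra all_fingroup.
Set Implicit Arguments. Unset Strict Implicit. Unset Printing Implicit Defensive.
Import Order.TTheory GRing.Theory Num.Theory.
Local Open Scope ring_scope.

(** Extended values Q ∪ {+oo}: [None] is +oo. *)
Definition ecost := option rat.

Definition cadd (x y : ecost) : ecost :=
  match x, y with Some a, Some b => Some (a + b) | _, _ => None end.

Definition cle (x y : ecost) : Prop :=
  match x, y with
  | _, None => True
  | None, Some _ => False
  | Some a, Some b => a <= b
  end.

Definition cscale (c : rat) (x : ecost) : ecost :=
  match x with Some a => Some (c * a) | None => None end.

Definition costfun (n : nat) := ('I_n -> rat) -> ecost.

(** First-order formulas over a language whose terms are of type [T],
    with equality and one binary relation symbol (<= for S, < for L). *)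
Inductive form (T : Type) : Type :=
| FEq : T -> T -> form T
| FRel : T -> T -> form T
| FNot : form T -> form T
| FAnd : form T -> form T -> form T
| FEx : nat -> form T -> form T.

Definition upd (e : nat -> rat) (v : nat) (x : rat) : nat -> rat :=
  fun m => if m == v then x else e m.

Fixpoint holds (T : Type) (teval : (nat -> rat) -> T -> rat)
    (rel : rat -> rat -> bool) (e : nat -> rat) (phi : form T) : Prop :=
  match phi with
  | FEq t u => teval e t = teval e u
  | FRel t u => rel (teval e t) (teval e u)
  | FNot p => ~ holds teval rel e p
  | FAnd p q => holds teval rel e p /\ holds teval rel e q
  | FEx v p => exists x : rat, holds teval rel (upd e v x) p
  end.

(** Terms of S = (Q; +, 1, <=). *)
Inductive termS : Type :=
| SVar : nat -> termS
| SOne : termS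
| SAdd : termS -> termS -> termS.

Fixpoint evalS (e : nat -> rat) (t : termS) : rat :=
  match t with
  | SVar v => e v
  | SOne => 1
  | SAdd t u => evalS e t + evalS e u
  end.

(** Terms of L = (Q; <, 1, (x |-> c x)_{c in Q}). *)
Inductive termL : Type :=
| LVar : nat -> termL
| LOne : termL
| LScale : rat -> termL -> termL.

Fixpoint evalL (e : nat -> rat) (t : termL) : rat :=
  match t with
  | LVar v => e v
  | LOne => 1
  | LScale c t => c * evalL e t
  end.

(** A partial function f : Q^n -> Q (undefined where f = +oo) is definable by
    phi(x_0, x_1, ..., x_n) (variable 0 is the value, variable i+1 the i-th
    argument): phi(a_0, a) holds iff f(a) = a_0 (finite). *)
Definition fo_definable (T : Type) (teval : (nat -> rat) -> T -> rat)
    (rel : rat -> rat -> bool) (n : nat) (f : costfun n) : Prop :=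
  exists phi : form T, forall (e : nat -> rat) (a : 'I_n -> rat),
    (forall i : 'I_n, e i.+1 = a i) ->
    (holds teval rel e phi <-> f a = Some (e 0%N)).

Definition piecewise_linear (n : nat) (f : costfun n) : Prop :=
  fo_definable evalS (fun x y => x <= y) f.

Definition piecewise_linear_homogeneous (n : nat) (f : costfun n) : Prop :=
  fo_definable evalL (fun x y => x < y) f.

Definition submodular (n : nat) (f : costfun n) : Prop :=
  forall a b : 'I_n -> rat,
    cle (cadd (f (fun i => Num.min (a i) (b i))) (f (fun i => Num.max (a i) (b i))))
        (cadd (f a) (f b)).

(** A k-ary fractional polymorphism given by its finite support as a list of
    pairs (weight, operation); omega(g) = total weight of entries equal to g.
    All listed weights are positive, so the listed operations form the support. *)
Definition frac_pol_of (I : Type) (ar : I -> nat)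
    (F : forall s : I, costfun (ar s)) (k : nat)
    (omega : seq (rat * (('I_k -> rat) -> rat))) : Prop :=
  (forall p, p \in map fst omega -> 0 < p) /\
  \sum_(p <- omega) p.1 = 1 /\
  forall (s : I) (a : 'I_k -> 'I_(ar s) -> rat),
    cle (\big[cadd/Some 0]_(p <- omega)
            cscale p.1 (F s (fun j => p.2 (fun i => a i j))))
        (cscale (k%:R)^-1 (\big[cadd/Some 0]_(i < k) F s (a i))).

Definition symmetric_op (k : nat) (g : ('I_k -> rat) -> rat) : Prop :=
  forall (x : 'I_k -> rat) (sigma : {perm 'I_k}), g (fun i => x (sigma i)) = g x.

Definition fully_symmetric_frac_pol (I : Type) (ar : I -> nat)
    (F : forall s : I, costfun (ar s)) (k : nat)
    (omega : seq (rat * (('I_k -> rat) -> rat))) : Prop :=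
  frac_pol_of F omega /\ forall p, List.In p omega -> symmetric_op p.2.

(* Main.v *)
Require Import Defs.
From mathcomp Require Import all_boot all_order all_algebra all_fingroup.
From Stdlib Require Import FunctionalExtensionality.
Set Implicit Arguments. Unset Strict Implicit. Unset Printing Implicit Defensive.
Import Order.TTheory GRing.Theory Num.Theory.
Local Open Scope ring_scope.

Fixpoint inss (y : rat) (l : seq rat) : seq rat :=
  match l with
  | [::] => [:: y]
  | z :: l' => Num.min z y :: inss (Num.max z y) l'
  end.

Fixpoint insp n (x : 'I_n -> rat) (l : seq ('I_n -> rat)) : seq ('I_n -> rat) :=
  match l with
  | [::] => [:: x]
  | b :: l' => (fun i => Num.min (b i) (x i)) :: insp (fun i => Num.max (b i) (x i)) l'
  end.

Definition sortp n (L : seq ('I_n -> rat)) := foldr (@insp n) [::] L.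

Lemma map_insp n c (x : 'I_n -> rat) l :
  map (fun p => p c) (insp x l) = inss (x c) (map (fun p => p c) l).
Proof. by elim: l x => [|b l IH] x //=; rewrite IH. Qed.

Lemma inss_perm y l : perm_eq (inss y l) (y :: l).
Proof.
elim: l y => [|z l IH] y //=.
apply: (@perm_trans _ (Num.min z y :: Num.max z y :: l)); first by rewrite perm_cons.
case: (leP z y) => _; last by [].
by rewrite (perm_catCA [:: z] [:: y] l).
Qed.

Lemma inss_sorted y l : sorted <=%R l -> sorted <=%R (inss y l).
Proof.
elim: l y => [|z l IH] y //= Hs.
have Hl : sorted <=%R l by case: l Hs {IH} => //= a l /andP[].
rewrite (path_sortedE le_trans) IH // andbT.
rewrite (perm_all _ (inss_perm _ _)) /=.
have Hz : all (fun w => z <= w) l.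
  by move: Hs; rewrite (path_sortedE le_trans) => /andP[].
apply/andP; split; first by rewrite ge_min le_max lexx.
apply/allP => w Hw; rewrite ge_min; apply/orP; left; exact: (allP Hz).
Qed.

Lemma foldr_inss l : foldr inss [::] l = sort <=%R l.
Proof.
have Hs : sorted <=%R (foldr inss [::] l) by elim: l => //= a l IH; apply: inss_sorted.
have Hp : perm_eq (foldr inss [::] l) l.
  elim: l {Hs} => //= a l IH.
  apply: perm_trans (inss_perm _ _) _; by rewrite perm_cons.
rewrite -(sort_le_id Hs); exact/perm_sort_leP.
Qed.

Lemma map_sortp n c (L : seq ('I_n -> rat)) :
  map (fun p => p c) (sortp L) = sort <=%R (map (fun p => p c) L).
Proof.
rewrite -foldr_inss; elim: L => //= x L IH; by rewrite map_insp IH.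
Qed.

Lemma size_insp n (x : 'I_n -> rat) l : size (insp x l) = (size l).+1.
Proof. by elim: l x => //= b l IH x; rewrite IH. Qed.

Lemma size_sortp n (L : seq ('I_n -> rat)) : size (sortp L) = size L.
Proof. by elim: L => //= x L IH; rewrite size_insp IH. Qed.

Definition sumc (l : seq ecost) := foldr cadd (Some 0) l.

Lemma cle_trans x y z : cle x y -> cle y z -> cle x z.
Proof. case: x; case: y; case: z => //= a b c; exact: le_trans. Qed.

Lemma cle_refl x : cle x x.
Proof. by case: x => //= a. Qed.

Lemma cadd_le x y x' y' : cle x x' -> cle y y' -> cle (cadd x y) (cadd x' y').
Proof.
case: x; case: x'; case: y; case: y' => //= *; exact: lerD.
Qed.

Lemma caddA x y z : cadd x (cadd y z) = cadd (cadd x y) z.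
Proof. by case: x; case: y; case: z => //= *; rewrite addrA. Qed.

Lemma caddC x y : cadd x y = cadd y x.
Proof. by case: x; case: y => //= *; rewrite addrC. Qed.

Lemma insp_le n (f : costfun n) : submodular f -> forall S x,
  cle (sumc (map f (insp x S))) (cadd (f x) (sumc (map f S))).
Proof.
move=> Hf; elim => [|b S IH] x /=.
  case: (f x) => //= a; by rewrite addr0.
apply: cle_trans (cadd_le (cle_refl _) (IH _)) _.
rewrite caddA (caddA (f x)) (caddC (f x) (f b)).
apply: cadd_le; [exact: Hf | exact: cle_refl].
Qed.

Lemma sortp_le n (f : costfun n) : submodular f -> forall L,
  cle (sumc (map f (sortp L))) (sumc (map f L)).
Proof.
move=> Hf; elim => [|x L IH] /=; first exact: lexx.
apply: cle_trans (insp_le Hf _ _) _.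
exact: cadd_le (cle_refl _) IH.
Qed.

Lemma cscale_sum c l : cscale c (sumc l) = sumc (map (cscale c) l).
Proof.
elim: l => [|x l IH] /=; first by rewrite mulr0.
rewrite -IH; case: x => //= a; case: (sumc l) => //= b; by rewrite mulrDr.
Qed.

Lemma cscale_le c x y : 0 <= c -> cle x y -> cle (cscale c x) (cscale c y).
Proof. move=> Hc; case: x; case: y => //= a b H; exact: ler_wpM2l. Qed.

Lemma big_sumc (T : Type) (r : seq T) (G : T -> ecost) :
  \big[cadd/Some 0]_(p <- r) G p = sumc (map G r).
Proof. elim: r => [|x r IH]; by rewrite ?big_nil ?big_cons ?IH. Qed.

Definition ostat k (j : nat) (x : 'I_k -> rat) : rat :=
  nth 0 (sort <=%R [seq x i | i <- index_enum 'I_k]) j.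

Theorem corollary5 (I : Type) (ar : I -> nat) (F : forall s : I, costfun (ar s)) :
  ((forall s : I, piecewise_linear (F s)) \/
   (forall s : I, piecewise_linear_homogeneous (F s))) ->
  (forall s : I, submodular (F s)) ->
  forall k : nat, (2 <= k)%N ->
    exists omega : seq (rat * (('I_k -> rat) -> rat)),
      fully_symmetric_frac_pol F omega.
Proof.
move=> _ Hsub k Hk.
exists [seq ((k%:R)^-1, @ostat k j) | j <- iota 0 k].
have Hk0 : (0 : rat) < k%:R by rewrite ltr0n; case: k Hk.
split; [split; [|split]|].
- move=> p; rewrite -map_comp => /mapP [j _ ->] /=; by rewrite invr_gt0.
- have -> : iota 0 k = index_iota 0 k by rewrite /index_iota subn0.
  rewrite big_map sumr_const_nat subn0.
  by rewrite -[_ *+ k]mulr_natr mulVf // lt0r_neq0.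
- move=> s a.
  set L := [seq a i | i <- index_enum 'I_k].
  set S := sortp L.
  have HL : size L = k by rewrite size_map /index_enum unlock /= -enumT size_enum_ord.
  have HS : size S = k by rewrite size_sortp.
  pose p0 : 'I_(ar s) -> rat := fun => 0.
  rewrite big_map.
  rewrite (eq_big_seq (fun j => cscale k%:R^-1 (F s (nth p0 S j)))); last first.
    move=> j; rewrite mem_iota add0n => /andP[_ Hj] /=.
    congr (cscale _ (F s _)); apply: functional_extensionality => c.
    rewrite /ostat -(nth_map p0 0 (fun p => p c)); last by rewrite HS.
    rewrite map_sortp -map_comp; done.
  have -> : iota 0 k = index_iota 0 (size S) by rewrite /index_iota subn0 HS.
  rewrite -(@big_nth _ _ _ _ p0 S predT (fun p => cscale k%:R^-1 (F s p))).
  rewrite !big_sumc.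
  have -> : [seq cscale k%:R^-1 (F s x) | x <- S] = map (cscale k%:R^-1) (map (F s) S)
    by rewrite -map_comp.
  rewrite -cscale_sum; apply: cscale_le; first by rewrite invr_ge0 ltW.
  have -> : [seq F s (a i) | i <- index_enum 'I_k] = map (F s) L by rewrite -map_comp.
  exact: sortp_le.
- move=> p /List.in_map_iff [j [<- _]] /= x sigma.
  rewrite /ostat; congr nth; apply/perm_sort_leP.
  rewrite (map_comp x sigma); apply: perm_map.
  apply: uniq_perm; first by rewrite map_inj_uniq ?index_enum_uniq //; exact: perm_inj.
    exact: index_enum_uniq.
  move=> y; rewrite mem_index_enum; apply/mapP; exists (sigma^-1 y)%g.
    exact: mem_index_enum.
  by rewrite permKV.
Qed.
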